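(* For every $n\in\mathbb{N}$ there exists a constant $N\in\mathbb{N}$ such that the Torrent algorithm, run on any input $X\in\mathbb{R}^{n\times d}$, $Y\in\mathbb{R}^n$, $a\in\{1,\dots,n\}$, terminates (its while-loop stops) after fewer than $N$ iterations.
   Context: For $S\subseteq\{1,\dots,n\}$, $X_S$ and $Y_S$ denote the rows/entries with indices in $S$, and $\hat\beta^S_{\mathrm{OLS}}(X,Y):=(X_S^\top X_S)^{+}X_S^\top Y_S$ ($^{+}$: Moore–Penrose inverse). For $v\in\mathbb{R}^n$ and $a\in\{1,\dots,n\}$, $\mathrm{HT}(v,a)$ is the set of indices of the $a$ smallest entries of $v$, ties broken by a fixed deterministic rule. Torrent: set $S_0=\{1,\dots,n\}$, $e=Y$, $\mathrm{err}=\infty$, $t=0$. While $\|e\|_2<\mathrm{err}$ (here $e$ is the residual vector indexed by the current set $S_t$): set $t\gets t+1$, $\mathrm{err}\gets\|e\|_2$, $\hat\beta^t\gets\hat\beta^{S_{t-1}}_{\mathrm{OLS}}(X,Y)$, $v\gets|Y-X\hat\beta^t|$ (entrywise absolute value), $S_t\gets\mathrm{HT}(v,a)$, $e\gets|Y_{S_t}-X_{S_t}\hat\beta^t|$. Return $\hat\beta^t$. *)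

(* Defs.v *)
From HB Require Import structures.
From Stdlib Require Import Reals ClassicalEpsilon.
From mathcomp Require Import all_boot all_order all_algebra.
From mathcomp Require Import Rstruct.
Set Implicit Arguments. Unset Strict Implicit. Unset Printing Implicit Defensive.
Import Order.TTheory GRing.Theory Num.Theory.
Local Open Scope ring_scope.

Definition penrose {m k : nat} (A : 'M[R]_(m, k)) (B : 'M[R]_(k, m)) : Prop :=
  [/\ A *m B *m A = A, B *m A *m B = B, (A *m B)^T = A *m B & (B *m A)^T = B *m A].

Definition mp_inv {m k : nat} (A : 'M[R]_(m, k)) : 'M[R]_(k, m) :=
  epsilon (inhabits 0) (penrose A).

(* X_S : the rows of M with index in S (in increasing order of index). *)
Definition rows_of {n c : nat} (S : {set 'I_n}) (M : 'M[R]_(n, c)) : 'M[R]_(#|S|, c) :=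
  \matrix_(k < #|S|, j < c) M (enum_val k) j.

Definition ols {n d : nat} (S : {set 'I_n}) (X : 'M[R]_(n, d)) (Y : 'cV[R]_n) : 'cV[R]_d :=
  mp_inv ((rows_of S X)^T *m rows_of S X) *m (rows_of S X)^T *m rows_of S Y.

Definition abs_resid {n d : nat} (X : 'M[R]_(n, d)) (Y : 'cV[R]_n) (beta : 'cV[R]_d)
  : 'I_n -> R := fun i => `| Y i 0 - (X *m beta) i 0 |.

(* A hard-thresholding rule HT(v, a): for 1 <= a <= n, a set of exactly a indices
   carrying the a smallest entries of v (any fixed deterministic tie-breaking,
   i.e. any function of (v, a) with this property). *)
Definition is_hard_threshold {n : nat} (HT : ('I_n -> R) -> nat -> {set 'I_n}) : Prop :=
  forall (v : 'I_n -> R) (a : nat), (1 <= a <= n)%N ->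
    #|HT v a| = a /\
    (forall i j, i \in HT v a -> j \notin HT v a -> v i <= v j).

Fixpoint torrent_set {n d : nat} (HT : ('I_n -> R) -> nat -> {set 'I_n})
  (X : 'M[R]_(n, d)) (Y : 'cV[R]_n) (a : nat) (t : nat) : {set 'I_n} :=
  match t with
  | 0 => setT
  | t'.+1 => HT (abs_resid X Y (ols (torrent_set HT X Y a t') X Y)) a
  end.

(* beta^t = beta^{S_{t-1}}_OLS(X,Y) (meaningful for t >= 1). *)
Definition torrent_beta {n d : nat} (HT : ('I_n -> R) -> nat -> {set 'I_n})
  (X : 'M[R]_(n, d)) (Y : 'cV[R]_n) (a : nat) (t : nat) : 'cV[R]_d :=
  ols (torrent_set HT X Y a t.-1) X Y.

Definition torrent_enorm {n d : nat} (HT : ('I_n -> R) -> nat -> {set 'I_n})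
  (X : 'M[R]_(n, d)) (Y : 'cV[R]_n) (a : nat) (t : nat) : R :=
  match t with
  | 0 => Num.sqrt (\sum_(i < n) (Y i 0) ^+ 2)
  | _ => Num.sqrt (\sum_(i in torrent_set HT X Y a t)
                     (abs_resid X Y (torrent_beta HT X Y a t) i) ^+ 2)
  end.

(* After iteration t >= 1, err = ||e_{t-1}||_2 and the while-test is
   ||e_t||_2 < err; the loop stops after iteration t iff this test fails.
   (The test before the first iteration, ||Y|| < infinity, always succeeds.) *)
Definition torrent_stops_after {n d : nat} (HT : ('I_n -> R) -> nat -> {set 'I_n})
  (X : 'M[R]_(n, d)) (Y : 'cV[R]_n) (a : nat) (t : nat) : Prop :=
  (0 < t)%N /\ ~ (torrent_enorm HT X Y a t < torrent_enorm HT X Y a t.-1).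

(* Main.v *)
Require Import Defs.
From HB Require Import structures.
From Stdlib Require Import Reals Classical.
From mathcomp Require Import all_boot all_order all_algebra.
From mathcomp Require Import Rstruct.
Local Open Scope ring_scope.
Import Order.TTheory GRing.Theory Num.Theory.

Lemma enorm_S_eq n d (HT : ('I_n -> R) -> nat -> {set 'I_n}) X (Y : 'cV[R]_n) a i j :
  torrent_set (d:=d) HT X Y a i = torrent_set HT X Y a j ->
  torrent_enorm HT X Y a i.+1 = torrent_enorm HT X Y a j.+1.
Proof. by move=> E; rewrite /torrent_enorm /torrent_beta /= E. Qed.

Lemma chain (e : nat -> R) K :
  (forall t, (0 < t)%N -> (t <= K)%N -> e t < e t.-1) ->
  forall p m, (m < p)%N -> (p <= K)%N -> e p < e m.
Proof.
move=> H; elim=> [|p IH] m // hm hp.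
have h1 := H p.+1 isT hp; rewrite /= in h1.
case: (ltnP m p) => hmp.
  exact: lt_trans h1 (IH m hmp (ltnW hp)).
by have -> : m = p by apply/eqP; rewrite eqn_leq hmp -ltnS hm.
Qed.

Theorem lemma3p2 (n : nat) :
  exists N : nat,
    forall (HT : ('I_n -> R) -> nat -> {set 'I_n}), is_hard_threshold HT ->
    forall (d : nat) (X : 'M[R]_(n, d)) (Y : 'cV[R]_n) (a : nat),
      (1 <= a <= n)%N ->
      exists t : nat, (t < N)%N /\ torrent_stops_after HT X Y a t.
Proof.
exists (#|{set 'I_n}|).+2 => HT _ d X Y a _.
set K := #|{set 'I_n}|.
apply: NNPP => Hn0.
have Hn : forall t, ~ ((t < K.+2)%N /\ torrent_stops_after HT X Y a t) by move=> t ht; apply: Hn0; exists t.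
have Hdec : forall t, (0 < t)%N -> (t <= K.+1)%N ->
    torrent_enorm HT X Y a t < torrent_enorm HT X Y a t.-1.
  move=> t t0 tK; apply/negP/negP/negP => hc.
  by apply: (Hn t); split; [rewrite ltnS|split=> // hh; move/negP: hc].
pose h := fun i : 'I_K.+1 => torrent_set HT X Y a i.
have : ~~ injectiveb h.
  apply/negP => /injectiveP inj.
  by have := @leq_card _ _ h inj; rewrite card_ord -/K ltnn.
case/injectivePn => i [j] nij hij.
wlog lij : i j nij hij / (i < j)%N.
  move=> W; case: (ltngtP i j) => c; first exact: W c.
  - by apply: (W j i) => //; rewrite eq_sym.
  - by move/val_inj: c nij => ->; rewrite eqxx.
have E := @enorm_S_eq n d HT X Y a i j hij.
have := @chain (torrent_enorm HT X Y a) K.+1 Hdec j.+1 i.+1 lij (ltn_ord j).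
by rewrite E ltxx.
Qed.
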